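(* Let $G$ be a directed graph with real edge weights and no cycle of negative or zero weight. Let $P_1$ be a shortest path from $s_1$ to $t_1$ and $P_2$ a shortest path from $s_2$ to $t_2$, and let $(v_1,w_1),\dots,(v_r,w_r)$ be the concordant pairs for $P_1,P_2$. Then: (1) for $i\neq j$, $V(P_1[v_i,w_i])\cap V(P_1[v_j,w_j])=\emptyset$ and $V(P_2[v_i,w_i])\cap V(P_2[v_j,w_j])=\emptyset$; (2) if the concordant pairs are ordered along $P_1$ as $(v_1,w_1),\dots,(v_r,w_r)$, then along $P_2$ they appear in exactly the reversed order.
   Context: For a path $P$ and vertices $x,y$ on $P$, $x$ precedes $y$ on $P$ if $x=y$ or $x$ appears before $y$ on $P$; then $P[x,y]$ is the subpath from $x$ to $y$. Two paths, from $x_1$ to $y_1$ and from $x_2$ to $y_2$, are internally vertex-disjoint if they share no vertex outside $\{x_1,y_1\}\cap\{x_2,y_2\}$. Concordant pair: for paths $P_1$ from $x_1$ to $y_1$ and $P_2$ from $x_2$ to $y_2$, a pair of vertices $(a,b)$, not contained in the set $\{x_1,y_1\}\cap\{x_2,y_2\}$, is a concordant pair for $P_1,P_2$ if $a$ precedes $b$ on both $P_1$ and $P_2$, the subpaths $P_1[x_1,a]$ and $P_2[x_2,a]$ are internally vertex-disjoint, and the subpaths $P_1[b,y_1]$ and $P_2[b,y_2]$ are internally vertex-disjoint. *)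

(* Defs.v *)
From mathcomp Require Import all_boot all_order all_algebra.
From mathcomp Require Export reals.
Set Implicit Arguments. Unset Strict Implicit. Unset Printing Implicit Defensive.
Import Order.TTheory GRing.Theory Num.Theory.
Local Open Scope ring_scope.

Definition walk_weight (V : eqType) (R : numDomainType) (w : V -> V -> R)
  (p : seq V) : R :=
  match p with [::] => 0 | x :: s => \sum_(e <- pairmap w x s) e end.

Definition is_path (V : eqType) (E : rel V) (x y : V) (p : seq V) : Prop :=
  exists2 q, p = x :: q & [/\ path E x q, last x q = y & uniq p].

(* A (simple) directed cycle x_0 ... x_(k-1) (k >= 1, loops allowed):
   edges x_i -> x_(i+1) and x_(k-1) -> x_0. *)
Definition is_cycle (V : eqType) (E : rel V) (c : seq V) : Prop :=
  [/\ c != [::], cycle E c & uniq c].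

Definition cycle_weight (V : eqType) (R : numDomainType) (w : V -> V -> R)
  (c : seq V) : R :=
  match c with [::] => 0 | x :: s => \sum_(e <- pairmap w x (rcons s x)) e end.

Definition shortest_path (V : eqType) (R : numDomainType) (E : rel V)
  (w : V -> V -> R) (x y : V) (p : seq V) : Prop :=
  is_path E x y p /\ forall q, is_path E x y q -> walk_weight w p <= walk_weight w q.

Definition precedes (V : eqType) (P : seq V) (x y : V) : Prop :=
  [/\ x \in P, y \in P & (index x P <= index y P)%N].

Definition subpath (V : eqType) (P : seq V) (x y : V) : seq V :=
  take (index y P - index x P).+1 (drop (index x P) P).

Definition int_disjoint (V : eqType) (Q1 : seq V) (x1 y1 : V)
  (Q2 : seq V) (x2 y2 : V) : Prop :=
  forall v, v \in Q1 -> v \in Q2 -> v \in [:: x1; y1] /\ v \in [:: x2; y2].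

Definition concordant (V : eqType) (P1 : seq V) (x1 y1 : V)
  (P2 : seq V) (x2 y2 : V) (a b : V) : Prop :=
  [/\ ~ (a \in [:: x1; y1] /\ a \in [:: x2; y2]),
      ~ (b \in [:: x1; y1] /\ b \in [:: x2; y2]),
      precedes P1 a b /\ precedes P2 a b,
      int_disjoint (subpath P1 x1 a) x1 a (subpath P2 x2 a) x2 a
    & int_disjoint (subpath P1 b y1) b y1 (subpath P2 b y2) b y2].

(* Main.v *)
Require Import Defs.
From mathcomp Require Import all_boot all_order all_algebra reals.
From mathcomp Require Import zify lra.
Import Order.TTheory GRing.Theory Num.Theory.
Set Implicit Arguments. Unset Strict Implicit.
Local Open Scope ring_scope.

Lemma ww_cons (V : eqType) (R : numDomainType) (w : V -> V -> R) x y s :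
  walk_weight w (x :: y :: s) = w x y + walk_weight w (y :: s).
Proof. by rewrite /walk_weight /= big_cons. Qed.

Lemma ww_cat (V : eqType) (R : numDomainType) (w : V -> V -> R) x a b :
  walk_weight w (x :: (a ++ b)) = walk_weight w (x :: a) + walk_weight w (last x a :: b).
Proof. by rewrite /walk_weight pairmap_cat big_cat. Qed.

Lemma reduce (R : realType) (V : eqType) (E : rel V) (w : V -> V -> R)
  (Hcyc : forall c : seq V, is_cycle E c -> 0 < cycle_weight w c) :
  forall s x, path E x s -> exists p, [/\ path E x p, last x p = last x s,
    uniq (x :: p) & (p = s \/ walk_weight w (x :: p) < walk_weight w (x :: s))].
Proof.
elim=> [|y s IH] x.
  by move=> _; exists [::]; split => //; left.
rewrite [path _ _ _]/= => /andP[Exy Hp]; have [p [Hp1 Hl Hu Hw]] := IH y Hp.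
have Hle : walk_weight w (y :: p) <= walk_weight w (y :: s).
  by case: Hw => [->|/ltW].
case: (boolP (x \in y :: p)) => Hx.
  pose l := take (index x (y :: p)) (y :: p).
  pose r := drop (index x (y :: p)).+1 (y :: p).
  have Hlr : y :: p = l ++ x :: r.
    by rewrite /l /r -{2}(nth_index x Hx) -drop_nth ?index_mem // cat_take_drop.
  have Hpa : path E x (rcons l x ++ r) by rewrite cat_rcons -Hlr /= Exy.
  move: Hpa; rewrite cat_path last_rcons => /andP[Hc Hr].
  have Hu' : uniq (rcons l x ++ r) by rewrite cat_rcons -Hlr.
  move: Hu'; rewrite cat_uniq rcons_uniq => /and3P[/andP[Hxl Hul] _ Hur].
  have Hr' : uniq (x :: r).
    by move: Hu; rewrite Hlr cat_uniq => /and3P[_ _].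
  exists r; split => //.
    by rewrite /= -Hl -[last y p]/(last x (y :: p)) Hlr last_cat /=.
  right.
  have Hcy : 0 < cycle_weight w (x :: l).
    by apply: Hcyc; split => //=; rewrite Hxl.
  have : walk_weight w (x :: y :: p) = cycle_weight w (x :: l) + walk_weight w (x :: r).
    by rewrite Hlr -cat_rcons ww_cat last_rcons.
  rewrite !ww_cons => H; move: H Hcy Hle.
  move=> H1 H2 H3. lra.
exists (y :: p); split => //; first by rewrite /= Exy.
  by rewrite /= Hx.
case: Hw => [->|Hw]; [by left|right].
by rewrite !ww_cons ltrD2l.
Qed.
Lemma last_take (V : eqType) (L : seq V) k x :
  (k <= size L)%N -> last x (take k L) = nth x (x :: L) k.
Proof.
elim: L k x => [|y L IH] [|k] x //= Hk.
by rewrite IH // (set_nth_default x) //=.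
Qed.

Lemma closed_pos (R : realType) (V : eqType) (E : rel V) (w : V -> V -> R)
  (Hcyc : forall c : seq V, is_cycle E c -> 0 < cycle_weight w c) x q :
  path E x q -> last x q = x -> q != [::] -> 0 < walk_weight w (x :: q).
Proof.
move=> Hp Hl Hq; have [p [Hp1 Hl1 Hu Hw]] := reduce Hcyc Hp.
have Hp0 : p = [::].
  case: p Hp1 Hl1 Hu Hw => // z p' _ Hl1 Hu _.
  have Hx : last z p' = x by rewrite -Hl; exact: Hl1.
  by move: Hu => /= /andP[]; rewrite -Hx mem_last.
case: Hw => [Heq|]; first by move: Hq; rewrite -Heq Hp0.
by rewrite Hp0 {1}/walk_weight /= big_nil.
Qed.

Definition pw (V : eqType) (R : numDomainType) (w : V -> V -> R) (P : seq V) k :=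
  walk_weight w (take k.+1 P).

Lemma seg_walk (R : realType) (V : eqType) (E : rel V) (w : V -> V -> R) s P' a b :
  path E s P' -> a \in s :: P' -> b \in s :: P' ->
  (index a (s :: P') <= index b (s :: P'))%N ->
  exists q, [/\ subpath (s :: P') a b = a :: q, path E a q, last a q = b &
    walk_weight w (a :: q) = pw w (s :: P') (index b (s :: P')) - pw w (s :: P') (index a (s :: P'))].
Proof.
move=> Hp Ha Hb Hab.
set P := s :: P'; set i := index a P; set j := index b P.
have Hi : (i < size P)%N by rewrite index_mem.
have Hj : (j < size P)%N by rewrite index_mem.
have Hna : nth s P i = a by rewrite nth_index.
have Hnb : nth s P j = b by rewrite nth_index.
have HdP : drop i P = a :: drop i P' by rewrite (drop_nth s) // Hna.
have Hlt : last s (take i P') = a by rewrite last_take -?Hna //; move: Hi => /=.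
exists (take (j - i) (drop i P')).
have HP' : P' = take i P' ++ drop i P' by rewrite cat_take_drop.
split.
- by rewrite /subpath -/P -/i -/j HdP.
- move: Hp; rewrite {1}HP' cat_path Hlt => /andP[_ Hd].
  by move: Hd; rewrite -{1}(cat_take_drop (j - i) (drop i P')) cat_path => /andP[].
- rewrite last_take; last by rewrite size_drop; move: Hj => /=; lia.
  rewrite -HdP nth_drop subnKC //.
  by rewrite (set_nth_default s) ?Hnb.
- rewrite /pw -/P.
  have -> : take j.+1 P = s :: (take i P' ++ take (j - i) (drop i P')).
    by rewrite -takeD subnKC.
  by rewrite ww_cat Hlt /=; lra.
Qed.

Lemma sp_le (R : realType) (V : eqType) (E : rel V) (w : V -> V -> R)
  (Hcyc : forall c : seq V, is_cycle E c -> 0 < cycle_weight w c) s t P' a b q :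
  shortest_path E w s t (s :: P') -> a \in s :: P' -> b \in s :: P' ->
  (index a (s :: P') <= index b (s :: P'))%N -> path E a q -> last a q = b ->
  pw w (s :: P') (index b (s :: P')) - pw w (s :: P') (index a (s :: P')) <= walk_weight w (a :: q).
Proof.
move=> [[q0 [<-] [Hp Hlast Hu]] Hmin] Ha Hb Hab Hq Hlq.
set P := s :: P'; set i := index a P; set j := index b P.
have Hi : (i < size P)%N by rewrite index_mem.
have Hj : (j < size P)%N by rewrite index_mem.
have Hlti : last s (take i P') = a.
  rewrite last_take; last by move: Hi => /=.
  by rewrite -[in RHS](nth_index s Ha).
have Hltj : last s (take j P') = b.
  rewrite last_take; last by move: Hj => /=.
  by rewrite -[in RHS](nth_index s Hb).
set W := take i P' ++ (q ++ drop j P').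
have HpW : path E s W.
  rewrite cat_path cat_path Hlti Hq Hlq.
  move: (Hp); rewrite -{1}(cat_take_drop i P') cat_path => /andP[-> _].
  by move: Hp; rewrite -{1}(cat_take_drop j P') cat_path Hltj => /andP[_ ->].
have HlW : last s W = t.
  by rewrite !last_cat Hlti Hlq -Hltj -last_cat cat_take_drop.
have [p [Hp1 Hl1 Hu1 Hw1]] := reduce Hcyc HpW.
have H1 : walk_weight w P <= walk_weight w (s :: p).
  by apply: Hmin; exists p => //; split => //; rewrite Hl1.
have H2 : walk_weight w (s :: p) <= walk_weight w (s :: W).
  by case: Hw1 => [->|/ltW].
have E1 : walk_weight w P = walk_weight w (s :: take j P') + walk_weight w (b :: drop j P').
  by rewrite /P -{1}(cat_take_drop j P') ww_cat Hltj.
have E2 : walk_weight w (s :: W) = walk_weight w (s :: take i P') + walk_weight w (a :: q)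
   + walk_weight w (b :: drop j P').
  by rewrite /W ww_cat Hlti ww_cat Hlq addrA.
change (walk_weight w (s :: take j P') - walk_weight w (s :: take i P') <= walk_weight w (a :: q)); lra.
Qed.

Lemma cross_pos (R : realType) (V : eqType) (E : rel V) (w : V -> V -> R)
  (Hcyc : forall c : seq V, is_cycle E c -> 0 < cycle_weight w c) s1 P1 s2 P2 x y :
  path E s1 P1 -> path E s2 P2 ->
  x \in s1 :: P1 -> y \in s1 :: P1 -> x \in s2 :: P2 -> y \in s2 :: P2 ->
  (index x (s1 :: P1) < index y (s1 :: P1))%N ->
  (index y (s2 :: P2) < index x (s2 :: P2))%N ->
  0 < (pw w (s1 :: P1) (index y (s1 :: P1)) - pw w (s1 :: P1) (index x (s1 :: P1)))
    + (pw w (s2 :: P2) (index x (s2 :: P2)) - pw w (s2 :: P2) (index y (s2 :: P2))).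
Proof.
move=> Hp1 Hp2 Hx1 Hy1 Hx2 Hy2 Hxy1 Hyx2.
have [q1 [_ Hq1 Hl1 Hw1]] := seg_walk w Hp1 Hx1 Hy1 (ltnW Hxy1).
have [q2 [_ Hq2 Hl2 Hw2]] := seg_walk w Hp2 Hy2 Hx2 (ltnW Hyx2).
rewrite -Hw1 -Hw2.
have Hxy : x != y.
  by apply/eqP => Exy; move: Hxy1; rewrite Exy ltnn.
have Hq1n : q1 != [::] by apply/eqP => Eq; move: Hl1 Hxy; rewrite Eq /= => ->; rewrite eqxx.
have -> : walk_weight w (y :: q2) = walk_weight w (last x q1 :: q2) by rewrite Hl1.
rewrite -ww_cat; apply: (closed_pos Hcyc).
- by rewrite cat_path Hq1 Hl1 Hq2.
- by rewrite last_cat Hl1 Hl2.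
- by case: q1 Hq1n {Hq1 Hl1 Hw1}.
Qed.

Lemma mem_seg (V : eqType) (P : seq V) n i z : uniq P ->
  (z \in take n (drop i P)) = (z \in P) && (i <= index z P < i + n)%N.
Proof.
move=> Hu.
case Hz: (z \in P); last first.
  by apply/negbTE/negP => /mem_take /mem_drop; rewrite Hz.
rewrite /=.
have Hk : (index z P < size P)%N by rewrite index_mem.
case: (ltnP (index z P) i) => Hki.
  have Ht : z \in take i P by rewrite in_take.
  have Hd : z \notin drop i P.
    move: Hu; rewrite -{1}(cat_take_drop i P) cat_uniq => /and3P[_ /hasPn Hn _].
    by apply/negP => Hd'; move: (Hn z Hd'); rewrite /= Ht.
  by apply/negbTE/negP => /mem_take; apply/negP.
have Ht : z \notin take i P by rewrite in_take // -leqNgt.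
have Hd : z \in drop i P.
  by move: Hz; rewrite -{1}(cat_take_drop i P) mem_cat (negbTE Ht).
have Hidx : index z P = i + index z (drop i P).
  rewrite -{1}(cat_take_drop i P) index_cat (negbTE Ht) size_take.
  by case: ifP => // /negbT; rewrite -leqNgt => Hs; lia.
rewrite in_take //; lia.
Qed.

Lemma mem_sub (V : eqType) (P : seq V) x y z : uniq P ->
  (index x P <= index y P)%N ->
  (z \in subpath P x y) = (z \in P) && (index x P <= index z P <= index y P)%N.
Proof.
move=> Hu Hxy; rewrite /subpath mem_seg //.
by case: (z \in P) => //=; apply/idP/idP => /andP[H1 H2]; apply/andP; split => //; lia.
Qed.

Lemma index_last (V : eqType) (s : V) P' : uniq (s :: P') ->
  index (last s P') (s :: P') = size P'.
Proof.
move=> Hu; rewrite -[last s P'](nth_last s (s :: P')) (index_uniq s) //.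
Qed.

Lemma X1 (R : realType) (V : eqType) (E : rel V) (w : V -> V -> R)
  (Hcyc : forall c : seq V, is_cycle E c -> 0 < cycle_weight w c) s1 t1 s2 t2 P1 P2 x y z :
  shortest_path E w s1 t1 (s1 :: P1) -> shortest_path E w s2 t2 (s2 :: P2) ->
  x \in s1 :: P1 -> y \in s1 :: P1 -> z \in s1 :: P1 ->
  x \in s2 :: P2 -> y \in s2 :: P2 -> z \in s2 :: P2 ->
  (index x (s1 :: P1) < index y (s1 :: P1))%N ->
  (index y (s1 :: P1) <= index z (s1 :: P1))%N ->
  (index y (s2 :: P2) < index x (s2 :: P2))%N ->
  (index x (s2 :: P2) <= index z (s2 :: P2))%N -> False.
Proof.
move=> HP1 HP2 x1 y1 z1 x2 y2 z2 H1 H2 H3 H4.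
have Hp1 : path E s1 P1 by case: HP1 => [[q [<-] []]].
have Hp2 : path E s2 P2 by case: HP2 => [[q [<-] []]].
have [q [_ Hq Hlq Hwq]] := seg_walk w Hp2 x2 z2 H4.
have A := sp_le Hcyc HP1 x1 z1 (leq_trans (ltnW H1) H2) Hq Hlq.
have [q' [_ Hq' Hlq' Hwq']] := seg_walk w Hp1 y1 z1 H2.
have B := sp_le Hcyc HP2 y2 z2 (leq_trans (ltnW H3) H4) Hq' Hlq'.
have C := cross_pos Hcyc Hp1 Hp2 x1 y1 x2 y2 H1 H3.
rewrite Hwq in A; rewrite Hwq' in B; clear -A B C; lra.
Qed.

Lemma X2 (R : realType) (V : eqType) (E : rel V) (w : V -> V -> R)
  (Hcyc : forall c : seq V, is_cycle E c -> 0 < cycle_weight w c) s1 t1 s2 t2 P1 P2 x y z :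
  shortest_path E w s1 t1 (s1 :: P1) -> shortest_path E w s2 t2 (s2 :: P2) ->
  x \in s1 :: P1 -> y \in s1 :: P1 -> z \in s1 :: P1 ->
  x \in s2 :: P2 -> y \in s2 :: P2 -> z \in s2 :: P2 ->
  (index z (s1 :: P1) <= index x (s1 :: P1))%N ->
  (index x (s1 :: P1) < index y (s1 :: P1))%N ->
  (index z (s2 :: P2) <= index y (s2 :: P2))%N ->
  (index y (s2 :: P2) < index x (s2 :: P2))%N -> False.
Proof.
move=> HP1 HP2 x1 y1 z1 x2 y2 z2 H1 H2 H3 H4.
have Hp1 : path E s1 P1 by case: HP1 => [[q [<-] []]].
have Hp2 : path E s2 P2 by case: HP2 => [[q [<-] []]].
have [q [_ Hq Hlq Hwq]] := seg_walk w Hp2 z2 y2 H3.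
have A := sp_le Hcyc HP1 z1 y1 (leq_trans H1 (ltnW H2)) Hq Hlq.
have [q' [_ Hq' Hlq' Hwq']] := seg_walk w Hp1 z1 x1 H1.
have B := sp_le Hcyc HP2 z2 x2 (leq_trans H3 (ltnW H4)) Hq' Hlq'.
have C := cross_pos Hcyc Hp1 Hp2 x1 y1 x2 y2 H2 H4.
rewrite Hwq in A; rewrite Hwq' in B; clear -A B C; lra.
Qed.

Unset Implicit Arguments. Set Strict Implicit.

Theorem lemma4 (R : realType) (V : finType) (E : rel V) (w : V -> V -> R)
  (Hcyc : forall c : seq V, is_cycle E c -> 0 < cycle_weight w c)
  (s1 t1 s2 t2 : V) (P1 P2 : seq V)
  (HP1 : shortest_path E w s1 t1 P1) (HP2 : shortest_path E w s2 t2 P2) :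
  (forall v1 w1 v2 w2 : V,
     concordant P1 s1 t1 P2 s2 t2 v1 w1 ->
     concordant P1 s1 t1 P2 s2 t2 v2 w2 ->
     (v1, w1) <> (v2, w2) ->
     [disjoint subpath P1 v1 w1 & subpath P1 v2 w2] /\
     [disjoint subpath P2 v1 w1 & subpath P2 v2 w2]) /\
  (forall v1 w1 v2 w2 : V,
     concordant P1 s1 t1 P2 s2 t2 v1 w1 ->
     concordant P1 s1 t1 P2 s2 t2 v2 w2 ->
     (index v1 P1 < index v2 P1)%N ->
     (index w2 P2 < index v1 P2)%N).
Proof.
have HP1c := HP1; have HP2c := HP2.
case: HP1 => [[P1' eP1 [Hp1 Hl1 Hu1]] _].
case: HP2 => [[P2' eP2 [Hp2 Hl2 Hu2]] _].
subst P1 P2.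
have Hs10 : index s1 (s1 :: P1') = 0%N by rewrite /= eqxx.
have Hs20 : index s2 (s2 :: P2') = 0%N by rewrite /= eqxx.
have Hmax1 : forall v, v \in (s1 :: P1') -> (index v (s1 :: P1') <= index t1 (s1 :: P1'))%N.
  move=> v Hv; rewrite -Hl1 index_last // -ltnS.
  by have := index_mem v (s1 :: P1'); rewrite Hv.
have Hmax2 : forall v, v \in (s2 :: P2') -> (index v (s2 :: P2') <= index t2 (s2 :: P2'))%N.
  move=> v Hv; rewrite -Hl2 index_last // -ltnS.
  by have := index_mem v (s2 :: P2'); rewrite Hv.
have mem1 := fun x y z => @mem_sub _ _ x y z Hu1.
have mem2 := fun x y z => @mem_sub _ _ x y z Hu2.
pose ENDS v := v \in [:: s1; t1] /\ v \in [:: s2; t2].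
have CFa : forall a b, concordant (s1 :: P1') s1 t1 (s2 :: P2') s2 t2 a b ->
  [/\ a \in (s1 :: P1'), b \in (s1 :: P1'), a \in (s2 :: P2') & b \in (s2 :: P2')] /\
  [/\ (index a (s1 :: P1') <= index b (s1 :: P1'))%N, (index a (s2 :: P2') <= index b (s2 :: P2'))%N, ~ ENDS a & ~ ENDS b].
  by move=> a b [N1 N2 [[? ? ?] [? ? ?]] _ _].
have CFd1 : forall a b, concordant (s1 :: P1') s1 t1 (s2 :: P2') s2 t2 a b ->
  forall v, v \in (s1 :: P1') -> v \in (s2 :: P2') -> (index v (s1 :: P1') <= index a (s1 :: P1'))%N -> (index v (s2 :: P2') <= index a (s2 :: P2'))%N ->
  v = a \/ ENDS v.
  move=> a b [N1 N2 [[Ha1 Hb1 Hab1] [Ha2 Hb2 Hab2]] D1 D2] v Hv1 Hv2 Hva1 Hva2.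
  have G1 : v \in subpath (s1 :: P1') s1 a by rewrite mem1 ?Hs10 // Hv1 Hva1.
  have G2 : v \in subpath (s2 :: P2') s2 a by rewrite mem2 ?Hs20 // Hv2 Hva2.
  have [H H0] := D1 v G1 G2.
  case: (eqVneq v a) => [->|Hne]; [by left|right].
  move: H H0; rewrite !inE (negbTE Hne) !orbF => /eqP Hs /eqP Hs'.
  by rewrite /ENDS Hs -Hs' Hs !inE !eqxx.
have CFd2 : forall a b, concordant (s1 :: P1') s1 t1 (s2 :: P2') s2 t2 a b ->
  forall v, v \in (s1 :: P1') -> v \in (s2 :: P2') -> (index b (s1 :: P1') <= index v (s1 :: P1'))%N -> (index b (s2 :: P2') <= index v (s2 :: P2'))%N ->
  v = b \/ ENDS v.
  move=> a b [N1 N2 [[Ha1 Hb1 Hab1] [Ha2 Hb2 Hab2]] D1 D2] v Hv1 Hv2 Hva1 Hva2.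
  have G1 : v \in subpath (s1 :: P1') b t1 by rewrite (mem1 _ _ _ (Hmax1 b Hb1)) Hv1 Hva1 (Hmax1 v Hv1).
  have G2 : v \in subpath (s2 :: P2') b t2 by rewrite (mem2 _ _ _ (Hmax2 b Hb2)) Hv2 Hva2 (Hmax2 v Hv2).
  have [H H0] := D2 v G1 G2.
  case: (eqVneq v b) => [->|Hne]; [by left|right].
  move: H H0; rewrite !inE (negbTE Hne) /= => /eqP Hs /eqP Hs'.
  by rewrite /ENDS Hs -Hs' Hs !inE !eqxx !orbT.
have PART2 : forall v1 w1 v2 w2,
     concordant (s1 :: P1') s1 t1 (s2 :: P2') s2 t2 v1 w1 ->
     concordant (s1 :: P1') s1 t1 (s2 :: P2') s2 t2 v2 w2 ->
     (index v1 (s1 :: P1') < index v2 (s1 :: P1'))%N -> (index w2 (s2 :: P2') < index v1 (s2 :: P2'))%N.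
  move=> v1 w1 v2 w2 C1 C2 H.
  have [[a1 b1 a2 b2] [o1 o2 n1 n2]] := CFa _ _ C1.
  have [[a1' b1' a2' b2'] [o1' o2' n1' n2']] := CFa _ _ C2.
  have S1 : (index v2 (s2 :: P2') < index v1 (s2 :: P2'))%N.
    rewrite ltnNge; apply/negP => H'.
    case: (CFd1 _ _ C2 v1 a1 a2 (ltnW H) H') => [E1|//].
    by move: H; rewrite E1 ltnn.
  rewrite ltnNge; apply/negP => H'.
  exact: (X1 Hcyc HP1c HP2c a1 a1' b1' a2 a2' b2' H o1' S1 H').
have ORD : forall v1 w1 v2 w2,
     concordant (s1 :: P1') s1 t1 (s2 :: P2') s2 t2 v1 w1 ->
     concordant (s1 :: P1') s1 t1 (s2 :: P2') s2 t2 v2 w2 ->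
     (index v1 (s1 :: P1') < index v2 (s1 :: P1'))%N ->
     [disjoint subpath (s1 :: P1') v1 w1 & subpath (s1 :: P1') v2 w2] /\
     [disjoint subpath (s2 :: P2') v1 w1 & subpath (s2 :: P2') v2 w2].
  move=> v1 w1 v2 w2 C1 C2 H.
  have [[a1 b1 a2 b2] [o1 o2 n1 n2]] := CFa _ _ C1.
  have [[a1' b1' a2' b2'] [o1' o2' n1' n2']] := CFa _ _ C2.
  have A := PART2 _ _ _ _ C1 C2 H.
  have B : (index w1 (s1 :: P1') < index v2 (s1 :: P1'))%N.
    rewrite ltnNge; apply/negP => H'.
    have [H''|H''|H''] := ltngtP (index w1 (s1 :: P1')) (index w2 (s1 :: P1')).
    - exact: (X2 Hcyc HP1c HP2c b1 b1' a1' b2 b2' a2' H' H'' o2' (leq_trans A o2)).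
    - case: (CFd2 _ _ C2 w1 b1 b2 (ltnW H'') (leq_trans (ltnW A) o2)) => [E1|//].
      by move: H''; rewrite E1 ltnn.
    - have E1 := index_inj s1 b1 b1' H''.
      by move: A o2; rewrite E1 => A o2; have := leq_trans A o2; rewrite ltnn.
  split; apply/pred0P => z /=; apply/negbTE/andP => [[Hz1 Hz2]].
  - move: Hz1 Hz2; rewrite (mem1 _ _ _ o1) (mem1 _ _ _ o1') => /and3P[_ Za Zb] /and3P[_ Zc Zd].
    by move: (leq_trans (leq_ltn_trans Zb B) Zc); rewrite ltnn.
  - move: Hz1 Hz2; rewrite (mem2 _ _ _ o2) (mem2 _ _ _ o2') => /and3P[_ Za Zb] /and3P[_ Zc Zd].
    by move: (leq_trans (leq_ltn_trans Zd A) Za); rewrite ltnn.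
have SAME : forall v w1 w2,
     concordant (s1 :: P1') s1 t1 (s2 :: P2') s2 t2 v w1 ->
     concordant (s1 :: P1') s1 t1 (s2 :: P2') s2 t2 v w2 ->
     (index w1 (s1 :: P1') < index w2 (s1 :: P1'))%N -> False.
  move=> v w1 w2 C1 C2 H.
  have [[a1 b1 a2 b2] [o1 o2 n1 n2]] := CFa _ _ C1.
  have [[a1' b1' a2' b2'] [o1' o2' n1' n2']] := CFa _ _ C2.
  case: (leqP (index w1 (s2 :: P2')) (index w2 (s2 :: P2'))) => H'.
  - case: (CFd2 _ _ C1 w2 b1' b2' (ltnW H) H') => [E1|//].
    by move: H; rewrite E1 ltnn.
  - exact: (X2 Hcyc HP1c HP2c b1 b1' a1 b2 b2' a2 o1 H o2' H').
split; last exact: PART2.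
move=> v1 w1 v2 w2 C1 C2 Hne.
have [[a1 b1 a2 b2] [o1 o2 n1 n2]] := CFa _ _ C1.
have [[a1' b1' a2' b2'] [o1' o2' n1' n2']] := CFa _ _ C2.
case: (eqVneq v1 v2) => [Ev|Hv].
  subst v2.
  have [H|H|H] := ltngtP (index w1 (s1 :: P1')) (index w2 (s1 :: P1')).
  - by case: (SAME _ _ _ C1 C2 H).
  - by case: (SAME _ _ _ C2 C1 H).
  - by case: Hne; rewrite (index_inj s1 b1 b1' H).
have [H|H|H] := ltngtP (index v1 (s1 :: P1')) (index v2 (s1 :: P1')).
- exact: ORD.
- by have [D1 D2] := ORD _ _ _ _ C2 C1 H; rewrite disjoint_sym D1 disjoint_sym D2.
- by move: Hv; rewrite (index_inj s1 a1 a1' H) eqxx.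
Qed.
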